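(* Consider the setting and hypotheses of the data-driven invariance theorem: the unknown system $\dot x=A_\star Z(x)+B_\star W(x)u$, data $\dot x^j=A_\star z^j+B_\star v^j+d^j$ with $|d^j|^2\le\omega$ ($j=0,\dots,T-1$), $\epsilon>0$, and a symmetric $A_{\mathrm{i}}\in\mathbb{R}^{p\times p}$, $B_{\mathrm{i}}\in\mathbb{R}^{p\times n}$, $\tau_0,\dots,\tau_{T-1}$ satisfying $$\begin{bmatrix}-I-\sum_{j}\tau_jc_j & B_{\mathrm{i}}^\top-\sum_{j}\tau_jb_j^\top & B_{\mathrm{i}}^\top\\ B_{\mathrm{i}}-\sum_{j}\tau_jb_j & A_{\mathrm{i}}-\sum_{j}\tau_ja_j & 0\\ B_{\mathrm{i}} & 0 & -A_{\mathrm{i}}\end{bmatrix}\preceq 0,\quad A_{\mathrm{i}}\succ 0,\quad \tau_j\ge0,$$ with $\bar\zeta:=-A_{\mathrm{i}}^{-1}B_{\mathrm{i}}$, $\bar P:=A_{\mathrm{i}}^{-1/2}$, $\bar Q:=I_n$. Let $\sigma_1,\dots,\sigma_q:\mathbb{R}^n\to\mathbb{R}$ be polynomials, $\lambda:\mathbb{R}^n\to\mathbb{R}$ a polynomial with $\lambda(x)\ge0$ for all $x$, and $\bar\eta>0$. Define $\mathcal{S}:=\{x:\sigma_j(x)\le0,\ j=1,\dots,q\}$ and, for $\theta\ge0$, $\mathcal{L}_\theta:=\{x:\lambda(x)\le\theta\}$. Suppose there exist polynomials $\ell,\eta,h:\mathbb{R}^n\to\mathbb{R}$, a polynomial $K:\mathbb{R}^n\to\mathbb{R}^m$,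 SOS polynomials $s_1,\dots,s_q,\varsigma\in\Sigma$ and $\theta\ge0$ such that $$\eta-\bar\eta\in\Sigma,\quad -H\in\Sigma_{1+p+n},\quad \varsigma(\lambda-\theta)-h\in\Sigma,\quad s_jh-\sigma_j\in\Sigma\ (j=1,\dots,q),$$ where $$H(x):=\begin{bmatrix}\ell(x)h(x)+\epsilon+\frac{\partial h}{\partial x}(x)\,\bar\zeta^\top\begin{bmatrix}Z(x)\\ W(x)K(x)\end{bmatrix} & \star & \star\\ \eta(x)\bar P\begin{bmatrix}Z(x)\\ W(x)K(x)\end{bmatrix} & -2\eta(x)I_p & \star\\ \bar Q^{1/2}\frac{\partial h}{\partial x}(x)^\top & 0 & -2\eta(x)I_n\end{bmatrix}.$$ Then $\mathcal{I}:=\{x\in\mathbb{R}^n:h(x)\le0\}$ is invariant for the closed-loop system $\dot x=A_\star Z(x)+B_\star W(x)K(x)$ and $\mathcal{L}_\theta\subseteq\mathcal{I}\subseteq\mathcal{S}$. (In particular this holds for any solution of the program maximizing $\theta$ subject to these constraints.)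
   Context: $A_\star\in\mathbb{R}^{n\times N_A}$, $B_\star\in\mathbb{R}^{n\times N_B}$ are unknown constant matrices; $Z:\mathbb{R}^n\to\mathbb{R}^{N_A}$ is a known vector of monomials and $W:\mathbb{R}^n\to\mathbb{R}^{N_B\times m}$ a known matrix of monomials; $p:=N_A+N_B$; $z^j=Z(x^j)$, $v^j=W(x^j)u^j$ for sampled states/inputs and $\dot x^j$ the sampled derivatives; $c_j:=-\omega I_n+\dot x^j(\dot x^j)^\top$, $b_j:=-\begin{bmatrix}z^j\\ v^j\end{bmatrix}(\dot x^j)^\top$, $a_j:=\begin{bmatrix}z^j\\ v^j\end{bmatrix}\begin{bmatrix}z^j\\ v^j\end{bmatrix}^\top$; sums run over $j=0,\dots,T-1$. $\Sigma$ is the set of SOS polynomials: polynomials $h$ with $h=\sum_{i=1}^k h_i^2$ for some polynomials $h_i$. $\Sigma_r$ is the set of SOS matrix polynomials: $r\times r$ matrix polynomials $H$ with $H(x)=\sum_{i=1}^kH_i(x)^\top H_i(x)$ for some $r\times r$ matrix polynomials $H_i$. $\star$ denotes blocks determined by symmetry; $\frac{\partial h}{\partial x}(x)$ is the gradient as a row vector. A set $\mathcal{I}$ is invariant for $\dot x=a(x)$ ($a$ polynomial) if every maximal solution starting in $\mathcal{I}$ remains in $\mathcal{I}$ on its whole interval of existence. *)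

(* Defs.v *)
From HB Require Import structures.
From mathcomp Require Import all_boot all_order all_algebra.
From mathcomp Require Import all_classical all_reals all_analysis.
From mathcomp Require mpoly.

Set Implicit Arguments.
Unset Strict Implicit.
Unset Printing Implicit Defensive.

Import Order.TTheory GRing.Theory Num.Theory.
Import numFieldNormedType.Exports.
Local Open Scope classical_set_scope.
Local Open Scope ring_scope.

Section Defs.
Context {R : realType} {n : nat}.

(* Points of R^n are column vectors 'cV[R]_n; coordinate i of x is x i 0. *)

Definition polyfun (f : 'cV[R]_n -> R) : Prop :=
  exists P : mpoly.mpoly n R, forall x, f x = mpoly.meval (fun i => x i 0) P.

Definition monomialfun (f : 'cV[R]_n -> R) : Prop :=
  exists k : 'I_n -> nat, forall x, f x = \prod_(i < n) (x i 0) ^+ k i.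

Definition polymx (r c : nat) (F : 'cV[R]_n -> 'M[R]_(r, c)) : Prop :=
  forall i j, polyfun (fun x => F x i j).

Definition sos (f : 'cV[R]_n -> R) : Prop :=
  exists (k : nat) (g : 'I_k -> 'cV[R]_n -> R),
    (forall i, polyfun (g i)) /\ forall x, f x = \sum_(i < k) (g i x) ^+ 2.

Definition sosmx (r : nat) (F : 'cV[R]_n -> 'M[R]_r) : Prop :=
  exists (k : nat) (G : 'I_k -> 'cV[R]_n -> 'M[R]_r),
    (forall i, polymx (G i)) /\
    forall x, F x = \sum_(i < k) ((G i x)^T *m G i x).

Definition grad (h : 'cV[R]_n -> R) (x : 'cV[R]_n) : 'rV[R]_n :=
  \row_(i < n) derive h x (delta_mx i 0 : 'cV[R]_n).

Definition sol_dom (T : \bar R) : set R := [set t | 0 <= t /\ (t%:E < T)%E].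

Definition is_solution (a : 'cV[R]_n -> 'cV[R]_n) (T : \bar R)
    (phi : R -> 'cV[R]_n) : Prop :=
  (0 < T)%E /\
  {within sol_dom T, continuous phi} /\
  (forall t, 0 < t -> (t%:E < T)%E ->
     derivable phi t 1 /\ derive1 phi t = a (phi t)).

Definition is_maximal_solution (a : 'cV[R]_n -> 'cV[R]_n) (T : \bar R)
    (phi : R -> 'cV[R]_n) : Prop :=
  is_solution a T phi /\
  forall (T' : \bar R) (psi : R -> 'cV[R]_n), is_solution a T' psi ->
    (forall t, sol_dom T t -> psi t = phi t) -> (T' <= T)%E.

Definition invariant_set (a : 'cV[R]_n -> 'cV[R]_n) (I : set 'cV[R]_n) : Prop :=
  forall (T : \bar R) (phi : R -> 'cV[R]_n), is_maximal_solution a T phi ->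
    I (phi 0) -> forall t, sol_dom T t -> I (phi t).

End Defs.

Definition psdmx {R : realType} (k : nat) (M : 'M[R]_k) : Prop :=
  forall v : 'cV[R]_k, 0 <= (v^T *m M *m v) 0 0.
Definition nsdmx {R : realType} (k : nat) (M : 'M[R]_k) : Prop := psdmx (- M).
Definition pdmx {R : realType} (k : nat) (M : 'M[R]_k) : Prop :=
  forall v : 'cV[R]_k, v != 0 -> 0 < (v^T *m M *m v) 0 0.

Section DataDriven.
Context {R : realType} {n m NA NB T : nat}.
Local Notation p := (NA + NB)%N.

Definition lmi_mx (omega : R) (zs : 'I_T -> 'cV[R]_NA) (vs : 'I_T -> 'cV[R]_NB)
    (xdots : 'I_T -> 'cV[R]_n) (tau : 'I_T -> R)
    (Ai : 'M[R]_p) (Bi : 'M[R]_(p, n)) : 'M[R]_(n + (p + p)) :=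
  let zv j := col_mx (zs j) (vs j) in
  let c j := - (omega%:M) + xdots j *m (xdots j)^T in
  let b j := - (zv j *m (xdots j)^T) in
  let a j := zv j *m (zv j)^T in
  block_mx
    (- 1%:M - \sum_(j < T) tau j *: c j)
    (row_mx (Bi^T - \sum_(j < T) tau j *: (b j)^T) Bi^T)
    (col_mx (Bi - \sum_(j < T) tau j *: b j) Bi)
    (block_mx (Ai - \sum_(j < T) tau j *: a j) 0 0 (- Ai)).

(* the matrix polynomial H(x) of the theorem (size 1 + p + n),
   with zetabar = - Ai^-1 Bi, Pbar = Ai^(-1/2), Qbar = I_n *)
Definition H_mx (Z : 'cV[R]_n -> 'cV[R]_NA) (W : 'cV[R]_n -> 'M[R]_(NB, m))
    (zetabar : 'M[R]_(p, n)) (Pbar : 'M[R]_p) (Qbar_sqrt : 'M[R]_n)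
    (eps : R) (ell eta h : 'cV[R]_n -> R) (K : 'cV[R]_n -> 'cV[R]_m)
    (x : 'cV[R]_n) : 'M[R]_(1 + (p + n)) :=
  let zw := col_mx (Z x) (W x *m K x) in
  let col1 := col_mx (eta x *: (Pbar *m zw)) (Qbar_sqrt *m (grad h x)^T) in
  block_mx
    ((ell x * h x + eps + (grad h x *m zetabar^T *m zw) 0 0)%:M)
    col1^T
    col1
    (block_mx (- (2 * eta x) *: 1%:M) 0 0 (- (2 * eta x) *: 1%:M)).

End DataDriven.

(* Main.v *)
Require Import Defs.
From HB Require Import structures.
From mathcomp Require Import all_boot all_order all_algebra.
From mathcomp Require Import all_classical all_reals all_analysis.
From mathcomp Require Import ring lra.
From mathcomp Require mpoly.

Import Order.TTheory GRing.Theory Num.Theory.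
Import numFieldNormedType.Exports.
Local Open Scope classical_set_scope.
Local Open Scope ring_scope.
Lemma within_eps {R : realType} {A : set R} {f : R -> R} {x : R} :
  {within A, continuous f} -> A x -> forall e, 0 < e ->
  exists2 d, 0 < d & forall y, A y -> `|x - y| < d -> `|f x - f y| < e.
Proof.
move=> /subspace_continuousP cf Ax e e0.
have := cf x Ax; move/cvgrPdist_lt/(_ e e0).
move/nbhs_ballP => [d /= d0 Hd]; exists d => // y Ay xy.
by apply: Hd.
Qed.

Lemma ode_nonpos {R : realType} (Tm : \bar R) (psi L : R -> R) (eps : R) :
  0 < eps ->
  {within [set t | 0 <= t /\ (t%:E < Tm)%E], continuous psi} ->
  {within [set t | 0 <= t /\ (t%:E < Tm)%E], continuous L} ->
  (forall t, 0 < t -> (t%:E < Tm)%E ->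
     derivable psi t 1 /\ derive1 psi t <= - (L t * psi t) - eps) ->
  psi 0 <= 0 -> forall t, 0 <= t -> (t%:E < Tm)%E -> psi t <= 0.
Proof.
set D := [set t | 0 <= t /\ (t%:E < Tm)%E].
move=> e0 cpsi cL hd psi0 t1 t10 t1T; rewrite leNgt; apply/negP => pos1.
have Dle : forall y, 0 <= y -> y <= t1 -> D y.
  move=> y y0 yt; split => //; apply: (le_lt_trans _ t1T); by rewrite lee_fin.
set S := [set s | (0 <= s /\ s <= t1) /\ psi s <= 0].
have S0 : S 0 by split.
have ubS : ubound S t1 by move=> s [[_ ?] _].
have hsS : has_sup S by split; [exists 0 | exists t1].
set t0 := sup S.
have t0ge : 0 <= t0 by apply: sup_upper_bound.
have t0le : t0 <= t1 by apply: sup_le_ub => //; exists 0.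
have Dt0 : D t0 by apply: Dle.
have pa : psi t0 <= 0.
  rewrite leNgt; apply/negP => p0.
  have [d d0 Hd] := within_eps cpsi Dt0 _ p0.
  have [s Ss ss] := sup_adherent d0 hsS.
  have st0 : s <= t0 by apply: sup_upper_bound.
  case: Ss => [[s0 st1] ps].
  have := Hd s (Dle s s0 st1).
  rewrite ger0_norm ?subr_ge0 //.
  have -> : t0 - s < d by rewrite ltrBlDr -ltrBlDl.
  move=> /(_ isT); rewrite ltr_norml => /andP[H1 H2]; lra.
have pb : forall s, t0 < s -> s <= t1 -> 0 < psi s.
  move=> s ts st; rewrite ltNge; apply/negP => ps.
  have : s <= t0 by apply: sup_upper_bound => //; split => //; split => //; lra.
  lra.
have t01 : t0 < t1.
  rewrite lt_neqAle t0le andbT; apply/eqP => E; move: pa; rewrite E; lra.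
have pc : 0 <= psi t0.
  rewrite leNgt; apply/negP => p0.
  have p0' : 0 < - psi t0 by lra.
  have [d d0 Hd] := within_eps cpsi Dt0 _ p0'.
  set s := t0 + Num.min (d / 2) (t1 - t0).
  have m1 : Num.min (d / 2) (t1 - t0) <= d / 2 by rewrite ge_min lexx.
  have m2 : Num.min (d / 2) (t1 - t0) <= t1 - t0 by rewrite ge_min lexx orbT.
  have m3 : 0 < Num.min (d / 2) (t1 - t0) by rewrite lt_min; apply/andP; split; lra.
  have := Hd s (Dle s ltac:(rewrite /s; lra) ltac:(rewrite /s; lra)).
  rewrite /s opprD addrA subrr sub0r normrN gtr0_norm //.
  have -> : Num.min (d / 2) (t1 - t0) < d by lra.
  move=> /(_ isT); rewrite ltr_norml => /andP[H1 H2].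
  have := pb s ltac:(rewrite /s; lra) ltac:(rewrite /s; lra).
  lra.
have pt0 : psi t0 = 0 by apply/eqP; rewrite eq_le pa pc.
have [d1 d10 HL] := within_eps cL Dt0 _ ltr01.
set M := `|L t0| + 1.
have M0 : 0 < M by rewrite /M; have := normr_ge0 (L t0); lra.
have eM : 0 < eps / M by apply: divr_gt0.
have [d2 d20 HP] := within_eps cpsi Dt0 _ eM.
set d := Num.min d1 d2.
have dd1 : d <= d1 by rewrite ge_min lexx.
have dd2 : d <= d2 by rewrite ge_min lexx orbT.
have d0 : 0 < d by rewrite lt_min d10 d20.
have G : forall y, D y -> `|t0 - y| < d -> - (L y * psi y) - eps < 0.
  move=> y Dy ty.
  have a1 := HL y Dy (lt_le_trans ty dd1).
  have a2 := HP y Dy (lt_le_trans ty dd2).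
  move: a2; rewrite pt0 sub0r normrN => a2.
  have a3 : `|L y| <= M.
    have -> : L y = L t0 - (L t0 - L y) by ring.
    apply: (le_trans (ler_normB _ _)); rewrite /M; lra.
  have a4 : `|L y * psi y| < eps.
    rewrite normrM.
    apply: (le_lt_trans (y := M * `|psi y|)).
      by apply: ler_wpM2r => //; apply: normr_ge0.
    by rewrite -ltr_pdivlMl // mulrC.
  have := ler_norm (- (L y * psi y)); rewrite normrN; lra.
set s := t0 + Num.min (d / 2) (t1 - t0).
have m1 : Num.min (d / 2) (t1 - t0) <= d / 2 by rewrite ge_min lexx.
have m2 : Num.min (d / 2) (t1 - t0) <= t1 - t0 by rewrite ge_min lexx orbT.
have m3 : 0 < Num.min (d / 2) (t1 - t0) by rewrite lt_min; apply/andP; split; lra.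
have ts : t0 < s by rewrite /s; lra.
have st1 : s <= t1 by rewrite /s; lra.
have dfc : forall x, x \in `]t0, s[ -> derivable psi x 1.
  move=> x; rewrite in_itv /= => /andP[x1 x2].
  by case: (hd x ltac:(lra)) => //; apply: (le_lt_trans _ t1T); rewrite lee_fin; lra.
have dfl : forall x, x \in `]t0, s[ -> derive1 psi x <= 0.
  move=> x; rewrite in_itv /= => /andP[x1 x2].
  have xT : (x%:E < Tm)%E by apply: (le_lt_trans _ t1T); rewrite lee_fin; lra.
  case: (hd x ltac:(lra) xT) => _ hx.
  have := G x (Dle x ltac:(lra) ltac:(lra)).
  rewrite ltr0_norm ?subr_lt0 // => /(_ ltac:(rewrite /s in x2; lra)); lra.
have cc : {within `[t0, s], continuous psi}.
  apply: continuous_subspaceW cpsi => x /=; rewrite in_itv /= => /andP[x1 x2].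
  by apply: Dle; lra.
have := ler0_derive1_le_cc dfc dfl cc.
move=> /(_ s t0); rewrite !in_itv /= !lexx (ltW ts) /= => /(_ isT isT isT).
have := pb s ts st1; lra.
Qed.

Section PB.
Context {R : realType} {V : normedModType R}.

Lemma diff_big_sum {I : Type} (s : seq I) (F : I -> V -> R) x :
  (forall i, differentiable (F i) x) ->
  differentiable (fun y => \sum_(i <- s) F i y) x.
Proof.
move=> dF; elim: s => [|a s IH].
  under eq_fun do rewrite big_nil.
  exact: differentiable_cst.
under eq_fun do rewrite big_cons.
exact: (differentiableD (dF a) IH).
Qed.

Lemma diff_big_prod {I : Type} (s : seq I) (F : I -> V -> R) x :
  (forall i, differentiable (F i) x) ->
  differentiable (fun y => \prod_(i <- s) F i y) x.
Proof.
move=> dF; elim: s => [|a s IH].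
  under eq_fun do rewrite big_nil.
  exact: differentiable_cst.
under eq_fun do rewrite big_cons.
exact: (differentiableM (dF a) IH).
Qed.

Lemma diff_pow (f : V -> R) k x : differentiable f x ->
  differentiable (fun y => f y ^+ k) x.
Proof.
move=> df; elim: k => [|k IH].
  under eq_fun do rewrite expr0.
  exact: differentiable_cst.
under eq_fun do rewrite exprS.
exact: (differentiableM df IH).
Qed.
End PB.

Lemma polyfun_diff {R : realType} {n : nat} (f : 'cV[R]_n -> R) :
  polyfun f -> forall x, differentiable f x.
Proof.
move=> [P HP] x.
have -> : f = fun y => \sum_(m <- mpoly.msupp P) mpoly.mcoeff m P * \prod_(i < n) (y i 0) ^+ mpoly.fun_of_multinom m i.
  by apply: funext => y; rewrite HP mpoly.mevalE.
apply: diff_big_sum => m.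
apply: (differentiableM (differentiable_cst _ _)).
apply: diff_big_prod => i.
apply: diff_pow.
exact: differentiable_coord.
Qed.

Lemma polyfun_cont {R : realType} {n : nat} (f : 'cV[R]_n -> R) :
  polyfun f -> continuous f.
Proof. by move=> pf x; apply: differentiable_continuous; apply: polyfun_diff. Qed.

Lemma chain_grad {R : realType} {n : nat} (h : 'cV[R]_n -> R) (phi : R -> 'cV[R]_n) t :
  differentiable h (phi t) -> derivable phi t 1 ->
  derivable (h \o phi) t 1 /\
  derive1 (h \o phi) t = (grad h (phi t) *m derive1 phi t) 0 0.
Proof.
move=> dh /derivable1_diffP dphi.
have dc : differentiable (h \o phi) t by apply: differentiable_comp.
split; first by apply/derivable1_diffP.
rewrite derive1E' // diff_comp // /= -derive1E' //.
set v := derive1 phi t.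
rewrite [in LHS](matrix_sum_delta v) linear_sum /= mxE.
apply: eq_bigr => i _; rewrite big_ord1 linearZ /= -deriveE // !mxE mulrC.
by [].
Qed.
Section LA.
Context {R : realType}.

Definition qf {k l : nat} (A : 'M[R]_(k, l)) (x : 'cV[R]_k) (y : 'cV[R]_l) : R :=
  (x^T *m A *m y) 0 0.
Definition dot {k : nat} (x y : 'cV[R]_k) : R := (x^T *m y) 0 0.

Lemma dotE {k} (x y : 'cV[R]_k) : dot x y = \sum_i x i 0 * y i 0.
Proof. by rewrite /dot mxE; apply: eq_bigr => i _; rewrite mxE. Qed.

Lemma dotC {k} (x y : 'cV[R]_k) : dot x y = dot y x.
Proof. by rewrite !dotE; apply: eq_bigr => i _; rewrite mulrC. Qed.

Lemma dotDl {k} (x y z : 'cV[R]_k) : dot (x + y) z = dot x z + dot y z.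
Proof. by rewrite /dot linearD /= mulmxDl mxE. Qed.
Lemma dotDr {k} (x y z : 'cV[R]_k) : dot z (x + y) = dot z x + dot z y.
Proof. by rewrite /dot mulmxDr mxE. Qed.
Lemma dotNl {k} (x z : 'cV[R]_k) : dot (- x) z = - dot x z.
Proof. by rewrite /dot linearN /= mulNmx mxE. Qed.
Lemma dotNr {k} (x z : 'cV[R]_k) : dot z (- x) = - dot z x.
Proof. by rewrite /dot mulmxN mxE. Qed.
Lemma dotZl {k} a (x z : 'cV[R]_k) : dot (a *: x) z = a * dot x z.
Proof. by rewrite /dot linearZ /= -scalemxAl mxE. Qed.
Lemma dotZr {k} a (x z : 'cV[R]_k) : dot z (a *: x) = a * dot z x.
Proof. by rewrite /dot -scalemxAr mxE. Qed.
Lemma dot_ge0 {k} (x : 'cV[R]_k) : 0 <= dot x x.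
Proof. by rewrite dotE; apply: sumr_ge0 => i _; rewrite -expr2 sqr_ge0. Qed.

Lemma qE {k l} (A : 'M[R]_(k, l)) x y : qf A x y = dot x (A *m y).
Proof. by rewrite /qf /dot mulmxA. Qed.
Lemma qD {k l} (A B : 'M[R]_(k, l)) x y : qf (A + B) x y = qf A x y + qf B x y.
Proof. by rewrite /qf mulmxDr mulmxDl mxE. Qed.
Lemma qN {k l} (A : 'M[R]_(k, l)) x y : qf (- A) x y = - qf A x y.
Proof. by rewrite /qf mulmxN mulNmx mxE. Qed.
Lemma qB {k l} (A B : 'M[R]_(k, l)) x y : qf (A - B) x y = qf A x y - qf B x y.
Proof. by rewrite qD qN. Qed.
Lemma qZ {k l} a (A : 'M[R]_(k, l)) x y : qf (a *: A) x y = a * qf A x y.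
Proof. by rewrite /qf -scalemxAr -scalemxAl mxE. Qed.
Lemma q0 {k l} x y : qf (0 : 'M[R]_(k, l)) x y = 0.
Proof. by rewrite /qf mulmx0 mul0mx mxE. Qed.
Lemma qsum {k l I} (r : seq I) (F : I -> 'M[R]_(k, l)) x y :
  qf (\sum_(i <- r) F i) x y = \sum_(i <- r) qf (F i) x y.
Proof.
elim: r => [|a r IH]; first by rewrite !big_nil q0.
by rewrite !big_cons qD IH.
Qed.
Lemma qsumZ {k l I} (r : seq I) (a : I -> R) (F : I -> 'M[R]_(k, l)) x y :
  qf (\sum_(i <- r) a i *: F i) x y = \sum_(i <- r) a i * qf (F i) x y.
Proof. by rewrite qsum; apply: eq_bigr => i _; rewrite qZ. Qed.
Lemma q1 {k} (x y : 'cV[R]_k) : qf 1%:M x y = dot x y.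
Proof. by rewrite qE mul1mx. Qed.
Lemma qscal {k} a (x y : 'cV[R]_k) : qf a%:M x y = a * dot x y.
Proof. by rewrite -scalemx1 qZ q1. Qed.
Lemma dotmul {k l} (A : 'M[R]_(k, l)) x y : dot x (A *m y) = dot (A^T *m x) y.
Proof. by rewrite /dot trmx_mul trmxK mulmxA. Qed.

Lemma qtr {k l} (A : 'M[R]_(k, l)) x y : qf A^T y x = qf A x y.
Proof. by rewrite !qE dotmul trmxK dotC. Qed.
Lemma qmul {k l r} (A : 'M[R]_(k, l)) (B : 'M[R]_(l, r)) x y :
  qf (A *m B) x y = qf B (A^T *m x) y.
Proof. by rewrite /qf trmx_mul trmxK !mulmxA. Qed.
Lemma qmulr {k l r} (A : 'M[R]_(k, l)) (B : 'M[R]_(l, r)) x y :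
  qf (A *m B) x y = qf A x (B *m y).
Proof. by rewrite /qf !mulmxA. Qed.
Lemma qouter {k l} (u : 'cV[R]_k) (w : 'cV[R]_l) x y :
  qf (u *m w^T) x y = dot x u * dot w y.
Proof.
rewrite /qf /dot !mulmxA -(mulmxA (x^T *m u)) mxE big_ord1.
by [].
Qed.
Lemma dot_col {k l} (a u : 'cV[R]_k) (b w : 'cV[R]_l) :
  dot (col_mx a b) (col_mx u w) = dot a u + dot b w.
Proof. by rewrite /dot tr_col_mx mul_row_col mxE. Qed.

Lemma quad3 {k1 k2 k3} (A11 : 'M[R]_(k1,k1)) (A12 : 'M[R]_(k1,k2)) (A13 : 'M[R]_(k1,k3))
  (A21 : 'M[R]_(k2,k1)) (A31 : 'M[R]_(k3,k1)) (A22 : 'M[R]_(k2,k2)) (A23 : 'M[R]_(k2,k3))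
  (A32 : 'M[R]_(k3,k2)) (A33 : 'M[R]_(k3,k3)) a b c :
  qf (block_mx A11 (row_mx A12 A13) (col_mx A21 A31) (block_mx A22 A23 A32 A33))
    (col_mx a (col_mx b c)) (col_mx a (col_mx b c)) =
  qf A11 a a + qf A12 a b + qf A13 a c + qf A21 b a + qf A31 c a
  + qf A22 b b + qf A23 b c + qf A32 c b + qf A33 c c.
Proof.
rewrite qE mul_block_col !mul_row_col mul_col_mx mul_block_col !dot_col.
rewrite !dotDr !dot_col !dotDr -!qE.
by rewrite !addrA; ring.
Qed.

Lemma cs {k} (d v : 'cV[R]_k) : dot d v ^+ 2 <= dot d d * dot v v.
Proof.
have [a0|apos] := eqVneq (dot v v) 0.
  have vi : forall i, v i 0 = 0.
    move=> i; move: a0; rewrite dotE => /psumr_eq0P H.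
    have /eqP := H (fun j _ => ltac:(by rewrite -expr2 sqr_ge0)) i isT.
    by rewrite mulf_eq0 orbb => /eqP.
  have -> : dot d v = 0 by rewrite dotE big1 // => i _; rewrite vi mulr0.
  by rewrite a0 expr0n /= mulr0.
have a0 : 0 < dot v v by rewrite lt_neqAle eq_sym apos dot_ge0.
have := dot_ge0 (dot v v *: d - dot d v *: v).
rewrite !dotDl !dotDr !dotNl !dotNr !dotZl !dotZr (dotC v d).
nra.
Qed.

Lemma pd_unit {k} (A : 'M[R]_k) : pdmx A -> A \in unitmx.
Proof.
move=> pd; rewrite unitmxE unitfE; apply/negP => /det0P [v nv vA].
have nv' : v^T != 0 by apply: contra nv => /eqP H; rewrite -(trmxK v) H trmx0.
by have := pd v^T nv'; rewrite trmxK vA mul0mx mxE ltxx.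
Qed.

Lemma data_term {n NA NB : nat} (Astar : 'M[R]_(n, NA)) (Bstar : 'M[R]_(n, NB))
  (z : 'cV[R]_NA) (w : 'cV[R]_NB) (x d : 'cV[R]_n) (omega : R)
  (Hd : x = Astar *m z + Bstar *m w + d) (Hn : dot d d <= omega) (v : 'cV[R]_n) :
  qf (- (omega%:M) + x *m x^T) v v
  + qf (- (col_mx z w *m x^T))^T v ((row_mx Astar Bstar)^T *m v)
  + qf (- (col_mx z w *m x^T)) ((row_mx Astar Bstar)^T *m v) v
  + qf (col_mx z w *m (col_mx z w)^T) ((row_mx Astar Bstar)^T *m v)
      ((row_mx Astar Bstar)^T *m v) <= 0.
Proof.
set zeta := (row_mx Astar Bstar)^T; set zv := col_mx z w.
rewrite qtr !qD !qN qscal !qouter.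
have E : dot (zeta *m v) zv = dot v x - dot v d.
  rewrite dotC dotmul /zeta trmxK /zv mul_row_col.
  have -> : Astar *m z + Bstar *m w = x - d by rewrite Hd addrK.
  by rewrite dotC dotDr dotNr.
rewrite E (dotC zv) E (dotC x v).
have := cs d v; rewrite (dotC d v) => H.
have := dot_ge0 v.
nra.
Qed.

Lemma qDl {k l} (A : 'M[R]_(k, l)) x x' y : qf A (x + x') y = qf A x y + qf A x' y.
Proof. by rewrite !qE dotDl. Qed.
Lemma qDr {k l} (A : 'M[R]_(k, l)) x y y' : qf A x (y + y') = qf A x y + qf A x y'.
Proof. by rewrite !qE mulmxDr dotDr. Qed.

Lemma ellipsoid {n NA NB T : nat} (Astar : 'M[R]_(n, NA)) (Bstar : 'M[R]_(n, NB))
  (zs : 'I_T -> 'cV[R]_NA) (vs : 'I_T -> 'cV[R]_NB) (xdots ds : 'I_T -> 'cV[R]_n)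
  (omega : R)
  (Hdata : forall j, xdots j = Astar *m zs j + Bstar *m vs j + ds j)
  (Hnoise : forall j, dot (ds j) (ds j) <= omega)
  (Ai : 'M[R]_(NA + NB)) (Bi : 'M[R]_(NA + NB, n)) (tau : 'I_T -> R)
  (HAisym : Ai^T = Ai) (HLMI : nsdmx (lmi_mx omega zs vs xdots tau Ai Bi))
  (Hu : Ai \in unitmx) (Htau : forall j, 0 <= tau j) (v : 'cV[R]_n) :
  qf Ai (((row_mx Astar Bstar)^T + invmx Ai *m Bi) *m v)
       (((row_mx Astar Bstar)^T + invmx Ai *m Bi) *m v) <= dot v v.
Proof.
set zeta := (row_mx Astar Bstar)^T.
set w := invmx Ai *m Bi *m v.
have H : 0 <= qf (- lmi_mx omega zs vs xdots tau Ai Bi)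
                (col_mx v (col_mx (zeta *m v) w)) (col_mx v (col_mx (zeta *m v) w)).
  exact: HLMI.
rewrite qN /lmi_mx quad3 !q0 !qB !qN q1 !qsumZ in H.
set S1 := \sum_i _ in H; set S2 := \sum_i _ in H.
set S3 := \sum_i _ in H; set S4 := \sum_i _ in H.
have HS : S1 + S2 + S3 + S4 <= 0.
  rewrite /S1 /S2 /S3 /S4 -!big_split /=.
  apply: sumr_le0 => j _.
  rewrite -!mulrDr; apply: mulr_ge0_le0 => //.
  exact: (data_term _ _ _ _ _ _ _ (Hdata j) (Hnoise j) v).
have Aw : Ai *m w = Bi *m v by rewrite /w !mulmxA mulmxV // mul1mx.
have F1 : qf Ai (zeta *m v) w = qf Bi (zeta *m v) v by rewrite !qE Aw.
have F2 : qf Ai w (zeta *m v) = qf Bi (zeta *m v) v by rewrite -qtr HAisym F1.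
have F3 : qf Ai w w = qf Bi w v by rewrite !qE Aw.
have F4 : qf Bi^T v (zeta *m v) = qf Bi (zeta *m v) v by rewrite qtr.
have F5 : qf Bi^T v w = qf Bi w v by rewrite qtr.
rewrite mulmxDl -/w qDl !qDr F1 F2.
rewrite F3 F4 F5 in H.
lra.
Qed.

Lemma e00B {k l} (A B : 'M[R]_(k, l)) i j : (A - B) i j = A i j - B i j.
Proof. by rewrite !mxE. Qed.
Lemma q_col1 {k} (u : 'cV[R]_k) y : qf u y 1%:M = dot y u.
Proof. by rewrite qE mulmx1. Qed.
Lemma dot11 : dot (1%:M : 'cV[R]_1) 1%:M = 1.
Proof. by rewrite dotE big_ord1 !mxE mulr1. Qed.

Lemma hpart {n m NA NB : nat} (Z : 'cV[R]_n -> 'cV[R]_NA) (W : 'cV[R]_n -> 'M[R]_(NB, m))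
  (Zb zeta : 'M[R]_(NA + NB, n)) (P Ai : 'M[R]_(NA + NB)) (eps : R)
  (ell eta h : 'cV[R]_n -> R) (K : 'cV[R]_n -> 'cV[R]_m) (x : 'cV[R]_n) :
  0 < eta x -> P^T = P -> P *m P = invmx Ai -> Ai \in unitmx ->
  (forall v, qf Ai ((zeta - Zb) *m v) ((zeta - Zb) *m v) <= dot v v) ->
  (forall V, 0 <= qf (- H_mx Z W Zb P 1%:M eps ell eta h K x) V V) ->
  (grad h x *m zeta^T *m col_mx (Z x) (W x *m K x)) 0 0 <= - (ell x * h x + eps).
Proof.
move=> e0 Psym PP Au Ell HH.
set e := eta x; set g := grad h x; set zw := col_mx (Z x) (W x *m K x).
set c := ell x * h x + eps.
have Pu : P \in unitmx.
  by have := unitmx_mul P P; rewrite PP unitmx_inv Au => /esym /andP[].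
set u := (zeta - Zb) *m g^T.
set y := invmx P *m u.
set s := (2 * e)^-1.
have Py : P *m y = u by rewrite /y mulmxA mulmxV // mul1mx.
have PA : P *m Ai = invmx P.
  rewrite -[P *m Ai]mul1mx -(mulVmx Pu) -!mulmxA (mulmxA P P) PP mulVmx //.
  by rewrite mulmx1.
have Yq : dot y y = qf Ai u u.
  by rewrite qE -Py dotC dotmul Psym !mulmxA PA mulVmx // mul1mx dotC -mulmxA.
have Yle : dot y y <= dot g^T g^T by rewrite Yq; apply: Ell.
have := HH (col_mx 1%:M (col_mx (s *: y) (s *: g^T))).
rewrite qN /H_mx -/e -/g -/zw tr_col_mx quad3.
rewrite !q0 qscal dot11 mulr1 (qtr (e *: _)) (qtr (1%:M *m g^T)).
rewrite !q_col1 !qZ !q1 !mul1mx !dotZl !dotZr.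
have D2 : dot u zw = (g *m zeta^T *m zw) 0 0 - (g *m Zb^T *m zw) 0 0.
  rewrite /u /dot trmx_mul trmxK linearB /= mulmxBr mulmxBl.
  by rewrite e00B.
set t1 := dot y (P *m zw).
have D1 : t1 = dot u zw by rewrite /t1 dotmul Psym Py.
have e0' : 0 < e by [].
have s0 : 0 < s by rewrite /s invr_gt0; lra.
have es : e * s = 2^-1 by rewrite /s; field; lra.
have K1 : s * (e * t1) = 2^-1 * t1 by rewrite -es; ring.
have K2 : forall X, - (2 * e) * (s * (s * X)) = - (2 * (e * s)) * (s * X).
  by move=> X; ring.
have h2 : 2 * (2^-1 : R) = 1 by rewrite mulfV //; lra.
rewrite K1 !K2 es h2 D1 D2 /c.
have KK : 0 <= s * dot g^T g^T - s * dot y y by rewrite -mulrBr; apply: mulr_ge0; lra.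
lra.
Qed.

End LA.

Lemma sosmx_psd {R : realType} {n r : nat} (F : 'cV[R]_n -> 'M[R]_r) :
  sosmx F -> forall x V, 0 <= qf (F x) V V.
Proof.
move=> [k [G [_ HG]]] x V; rewrite HG qsum; apply: sumr_ge0 => i _.
by rewrite qmul trmxK qE dot_ge0.
Qed.

Lemma sos_ge0 {R : realType} {n : nat} (f : 'cV[R]_n -> R) : sos f -> forall x, 0 <= f x.
Proof.
move=> [k [g [_ Hg]]] x; rewrite Hg; apply: sumr_ge0 => i _; exact: sqr_ge0.
Qed.

Theorem mainTheorem5
  (R : realType) (n m NA NB : nat)
  (Z : 'cV[R]_n -> 'cV[R]_NA) (W : 'cV[R]_n -> 'M[R]_(NB, m))
  (HZ : forall i, monomialfun (fun x => Z x i 0))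
  (HW : forall i j, monomialfun (fun x => W x i j))
  (Astar : 'M[R]_(n, NA)) (Bstar : 'M[R]_(n, NB))
  (T : nat) (xs : 'I_T -> 'cV[R]_n) (us : 'I_T -> 'cV[R]_m)
  (xdots : 'I_T -> 'cV[R]_n) (ds : 'I_T -> 'cV[R]_n) (omega : R)
  (Hdata : forall j, xdots j = Astar *m Z (xs j) + Bstar *m (W (xs j) *m us j) + ds j)
  (Hnoise : forall j, ((ds j)^T *m ds j) 0 0 <= omega)
  (eps : R) (Heps : 0 < eps)
  (Ai : 'M[R]_(NA + NB)) (Bi : 'M[R]_(NA + NB, n)) (tau : 'I_T -> R)
  (HAisym : Ai^T = Ai)
  (HLMI : nsdmx (lmi_mx omega (fun j => Z (xs j)) (fun j => W (xs j) *m us j)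
                        xdots tau Ai Bi))
  (HAipd : pdmx Ai)
  (Htau : forall j, 0 <= tau j)
  (Pbar : 'M[R]_(NA + NB))
  (HPsym : Pbar^T = Pbar) (HPpd : pdmx Pbar) (HPsq : Pbar *m Pbar = invmx Ai)
  (q : nat) (sigma : 'I_q -> 'cV[R]_n -> R) (Hsigma : forall j, polyfun (sigma j))
  (lam : 'cV[R]_n -> R) (Hlam : polyfun lam) (Hlam0 : forall x, 0 <= lam x)
  (etabar : R) (Hetabar : 0 < etabar)
  (ell eta h : 'cV[R]_n -> R) (K : 'cV[R]_n -> 'cV[R]_m)
  (s : 'I_q -> 'cV[R]_n -> R) (varsigma : 'cV[R]_n -> R) (theta : R)
  (Hell : polyfun ell) (Heta : polyfun eta) (Hh : polyfun h) (HK : polymx K)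
  (Hs : forall j, sos (s j)) (Hvarsigma : sos varsigma) (Htheta : 0 <= theta)
  (C1 : sos (fun x => eta x - etabar))
  (C2 : sosmx (fun x => - H_mx Z W (- (invmx Ai *m Bi)) Pbar 1%:M eps ell eta h K x))
  (C3 : sos (fun x => varsigma x * (lam x - theta) - h x))
  (C4 : forall j, sos (fun x => s j x * h x - sigma j x)) :
  invariant_set (fun x => Astar *m Z x + Bstar *m (W x *m K x)) [set x | h x <= 0]
  /\ [set x | lam x <= theta] `<=` [set x | h x <= 0]
  /\ [set x | h x <= 0] `<=` [set x | forall j, sigma j x <= 0].
Proof.
have Au : Ai \in unitmx by apply: pd_unit.
set zeta := (row_mx Astar Bstar)^T.
have Ell : forall v, qf Ai ((zeta - - (invmx Ai *m Bi)) *m v)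
                         ((zeta - - (invmx Ai *m Bi)) *m v) <= dot v v.
  move=> v; rewrite opprK.
  exact: (ellipsoid _ _ _ _ _ _ _ Hdata Hnoise _ _ _ HAisym HLMI Au Htau v).
have key : forall x, (grad h x *m (Astar *m Z x + Bstar *m (W x *m K x))) 0 0
                     <= - (ell x * h x + eps).
  move=> x.
  have ex : 0 < eta x by have := sos_ge0 _ C1 x; lra.
  have HH : forall V, 0 <= qf (- H_mx Z W (- (invmx Ai *m Bi)) Pbar 1%:M eps ell eta h K x) V V.
    by move=> V; apply: (sosmx_psd _ C2).
  have := @hpart R n m NA NB Z W (- (invmx Ai *m Bi)) zeta Pbar Ai eps ell eta h K x ex HPsym HPsq Au Ell HH.
  by rewrite /zeta trmxK -mulmxA mul_row_col.
split.
  move=> Tm phi [[Tpos [cphi hphi]] _] I0 t [t0 tT].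
  apply: (@ode_nonpos R Tm (h \o phi) (ell \o phi) eps) => //.
  - move=> y; exact: (continuous_comp (cphi y) (polyfun_cont _ Hh (phi y))).
  - move=> y; exact: (continuous_comp (cphi y) (polyfun_cont _ Hell (phi y))).
  - move=> y y0 yT; have [dphi Dphi] := hphi y y0 yT.
    have [dc Dc] := chain_grad _ _ _ (polyfun_diff _ Hh (phi y)) dphi.
    split => //; rewrite Dc Dphi /=.
    by have := key (phi y); rewrite opprD.
split.
  move=> x /= lx.
  have := sos_ge0 _ C3 x; have := sos_ge0 _ Hvarsigma x.
  nra.
move=> x /= hx j.
have := sos_ge0 _ (C4 j) x; have := sos_ge0 _ (Hs j) x.
nra.
Qed.
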